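(* Let $1\le a\le b\le c$ be integers, $K=K_{a,b,c}$ and $k=a+b+c$. Given $0<d\le 3/5$ and $\beta,\rho>0$, there exists $n_0$ such that the following holds. If every $3$-graph $H$ on $n>n_0$ vertices with $\delta_1(H)\ge d\binom n2$ has a $\beta$-deficient $K$-tiling, then every $3$-graph $H'$ on $n'>\max\{n_0,5\}$ vertices with $\delta_1(H')\ge(d-\rho)\binom{n'}2$ has a $(\beta+2k\rho)$-deficient $K$-tiling.
   Context: $K_{a,b,c}$ is the complete $3$-partite $3$-graph with parts of sizes $a,b,c$. $\delta_1(H)$ is the minimum over vertices of the number of edges containing the vertex. A $K$-tiling is a collection of vertex-disjoint copies of $K$. For $0\le\beta\le1$, a $K$-tiling of an $n$-vertex $3$-graph is $\beta$-deficient if it covers all but at most $\beta n$ vertices. *)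

(* Defs.v *)
From mathcomp Require Import all_boot all_order all_algebra.
Set Implicit Arguments. Unset Strict Implicit. Unset Printing Implicit Defensive.
Import Order.TTheory GRing.Theory Num.Theory.
Local Open Scope ring_scope.

Definition is_3graph (n : nat) (E : {set {set 'I_n}}) : Prop :=
  forall e, e \in E -> #|e| = 3.

Definition deg1 (n : nat) (E : {set {set 'I_n}}) (v : 'I_n) : nat :=
  #|[set e in E | v \in e]|.

Definition min_deg1_ge (R : numDomainType) (n : nat) (E : {set {set 'I_n}}) (x : R) : Prop :=
  forall v : 'I_n, x <= (deg1 E v)%:R.

Definition is_Kcopy (a b c n : nat) (E : {set {set 'I_n}})
    (T : {set 'I_n} * {set 'I_n} * {set 'I_n}) : Prop :=
  let: (A, B, C) := T in
  [/\ #|A| = a, #|B| = b, #|C| = c,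
      [/\ [disjoint A & B], [disjoint A & C] & [disjoint B & C]] &
      forall x y z, x \in A -> y \in B -> z \in C -> [set x; y; z] \in E].

Definition copy_verts (n : nat) (T : {set 'I_n} * {set 'I_n} * {set 'I_n}) : {set 'I_n} :=
  let: (A, B, C) := T in A :|: B :|: C.

Definition is_Ktiling (a b c n : nat) (E : {set {set 'I_n}})
    (s : seq ({set 'I_n} * {set 'I_n} * {set 'I_n})) : Prop :=
  (forall T, T \in s -> is_Kcopy a b c E T) /\
  (forall i j, (i < j)%N -> (j < size s)%N ->
     [disjoint copy_verts (nth (set0, set0, set0) s i)
             & copy_verts (nth (set0, set0, set0) s j)]).

Definition tiling_cover (n : nat) (s : seq ({set 'I_n} * {set 'I_n} * {set 'I_n})) : {set 'I_n} :=
  \bigcup_(T <- s) copy_verts T.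

Definition has_deficient_Ktiling (R : numDomainType) (a b c n : nat)
    (E : {set {set 'I_n}}) (beta : R) : Prop :=
  exists s, is_Ktiling a b c E s /\
    (#|~: tiling_cover s|%:R <= beta * n%:R :> R).

(* Main.v *)
Require Import Defs.
From mathcomp Require Import all_boot all_order all_algebra.
From mathcomp Require Import reals.
From mathcomp Require Import ring lra zify.
Import Order.TTheory GRing.Theory Num.Theory.
Local Open Scope ring_scope.

Lemma disj_bigcup (X : finType) (I : Type) (F : I -> {set X}) (A : {set X}) (s : seq I) :
  all (fun y => [disjoint A & F y]) s -> [disjoint A & \bigcup_(y <- s) F y].
Proof.
elim: s => [|x s IH] /=; first by rewrite big_nil disjoints_subset setC0 subsetT.
case/andP=> h1 h2; rewrite big_cons disjoints_subset setCU subsetI.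
by rewrite -!disjoints_subset h1 IH.
Qed.

Lemma card_bigcup_seq (X : finType) (I : Type) (F : I -> {set X}) (s : seq I) :
  pairwise (fun x y => [disjoint F x & F y]) s ->
  #|\bigcup_(x <- s) F x| = (\sum_(x <- s) #|F x|)%N.
Proof.
elim: s => [|x s IH] /=; first by rewrite !big_nil cards0.
case/andP=> h1 h2; rewrite !big_cons -IH // cardsU.
by rewrite disjoint_setI0 ?cards0 ?subn0 // disj_bigcup.
Qed.

Lemma bin2R (R : numDomainType) (n : nat) :
  ('C(n, 2)%:R : R) * 2 = n%:R * (n%:R - 1).
Proof.
elim: n => [|n IH]; first by rewrite !mul0r.
rewrite binS bin1 natrD mulrDl IH -natr1; ring.
Qed.

Lemma notin_sub (X : finType) (v : X) (A : {set X}) : A \subset [set~ v] -> v \notin A.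
Proof. by move/subsetP=> h; apply/negP=> /h; rewrite in_setC1 eqxx. Qed.

Arguments notin_sub {X v A}.

Lemma img_card (X : finType) (v : X) (S : {set {set X}}) :
  (forall A, A \in S -> v \notin A) -> #|[set v |: A | A in S]| = #|S|.
Proof.
move=> h; apply: card_in_imset => A B hA hB e.
by rewrite -(setU1K (h _ hA)) -(setU1K (h _ hB)) e.
Qed.

Lemma fam_card (X : finType) (v : X) (O : {set X}) :
  ('C(#|X|.-1, 2) - 'C(#|O :\ v|, 2) <=
   #|[set e : {set X} | [&& #|e| == 3, ~~ (e \subset O) & v \in e]]|)%N.
Proof.
set S1 := [set A : {set X} | A \subset [set~ v] & #|A| == 2].
set S2 := [set A : {set X} | A \subset O :\ v & #|A| == 2].
have c1 : #|S1| = 'C(#|X|.-1,2) by rewrite cards_draws cardsC1.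
have c2 : #|S2| = 'C(#|O:\v|, 2) by rewrite cards_draws.
have sub : S2 \subset S1.
  apply/subsetP=> A; rewrite !inE => /andP[h1 ->]; rewrite andbT.
  apply: subset_trans h1 _; apply/subsetP=> x /setD1P[hx _]; by rewrite in_setC1.
have cD : #|S1 :\: S2| = (#|S1| - #|S2|)%N by rewrite cardsD (setIidPr sub).
have hv : forall A, A \in S1 :\: S2 -> v \notin A.
  by move=> A /setDP[]; rewrite inE => /andP[/notin_sub].
rewrite -c1 -c2 -cD -(@img_card _ v _ hv); apply: subset_leq_card.
apply/subsetP=> e /imsetP[A hA ->]; rewrite inE.
move: hA => /setDP[]; rewrite !inE => /andP[hA1 /eqP hA2] hn.
rewrite eqxx /= andbT cardsU1 (notin_sub hA1) hA2 /=.
apply/negP=> hO; move: hn; rewrite hA2 eqxx andbT; apply/negP/negPn.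
rewrite subsetD1 (notin_sub hA1) andbT; apply: subset_trans hO; exact: subsetU1.
Qed.

Lemma fam_card2 (X : finType) (v : X) (O : {set X}) : v \notin O ->
  ('C(#|X|.-1, 2) <=
   #|[set e : {set X} | [&& #|e| == 3, ~~ (e \subset O) & v \in e]]|)%N.
Proof.
move=> vO.
set S1 := [set A : {set X} | A \subset [set~ v] & #|A| == 2].
have c1 : #|S1| = 'C(#|X|.-1,2) by rewrite cards_draws cardsC1.
have hv : forall A, A \in S1 -> v \notin A.
  by move=> A; rewrite inE => /andP[/notin_sub].
rewrite -c1 -(@img_card _ v _ hv); apply: subset_leq_card.
apply/subsetP=> e /imsetP[A hA ->]; rewrite inE.
move: hA; rewrite !inE => /andP[hA1 /eqP hA2].
rewrite eqxx /= andbT cardsU1 (notin_sub hA1) hA2 /=.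
apply/negP=> hO; move: vO; rewrite (subsetP hO) //; exact: setU11.
Qed.

Lemma preim_card (N n : nat) (g : 'I_N -> 'I_n) (A : {set 'I_n}) :
  injective g -> A \subset g @: setT -> #|g @^-1: A| = #|A|.
Proof.
move=> ginj hA.
suff e : g @: (g @^-1: A) = A by rewrite -{2}e card_imset.
apply/setP=> y; apply/imsetP/idP => [[x hx ->]|hy]; first by rewrite inE in hx.
have /imsetP[x _ ex] := subsetP hA y hy.
by exists x; rewrite // inE -ex.
Qed.

Lemma disj_preim (N n : nat) (g : 'I_N -> 'I_n) (A B : {set 'I_n}) :
  [disjoint A & B] -> [disjoint g @^-1: A & g @^-1: B].
Proof. by rewrite -!setI_eq0 -preimsetI => /eqP->; rewrite preimset0. Qed.

Definition phiT (N n : nat) (g : 'I_N -> 'I_n) (T : {set 'I_n} * {set 'I_n} * {set 'I_n}) :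
  {set 'I_N} * {set 'I_N} * {set 'I_N} :=
  (g @^-1: T.1.1, g @^-1: T.1.2, g @^-1: T.2).

Arguments phiT {N n}.

Lemma copy_transfer (a b c N n : nat) (g : 'I_N -> 'I_n) (E' : {set {set 'I_N}})
  (E : {set {set 'I_n}}) (T : {set 'I_n} * {set 'I_n} * {set 'I_n}) :
  injective g -> (forall e : {set 'I_N}, g @: e \in E -> e \in E') ->
  is_Kcopy a b c E T -> copy_verts T \subset g @: setT ->
  is_Kcopy a b c E' (phiT g T).
Proof.
move=> ginj hE; case: T => [[A B C]] /= [hA hB hC [dAB dAC dBC] he].
rewrite !subUset => /andP[/andP[sA sB] sC].
split; rewrite ?preim_card //; first by split; apply: disj_preim.
move=> x y z; rewrite !inE => hx hy hz; apply: hE.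
rewrite !imsetU !imset_set1; exact: he.
Qed.

Lemma cv_phi (N n : nat) (g : 'I_N -> 'I_n) (T : {set 'I_n} * {set 'I_n} * {set 'I_n}) :
  copy_verts (phiT g T) = g @^-1: copy_verts T.
Proof. by case: T => [[A B C]]; rewrite /= !preimsetU. Qed.

Lemma copy_card (a b c n : nat) (E : {set {set 'I_n}}) (T : {set 'I_n} * {set 'I_n} * {set 'I_n}) :
  is_Kcopy a b c E T -> #|copy_verts T| = (a + b + c)%N.
Proof.
case: T => [[A B C]] /= [hA hB hC [dAB dAC dBC] _].
rewrite cardsU cardsU (disjoint_setI0 dAB) cards0 subn0 setIUl.
by rewrite (disjoint_setI0 dAC) (disjoint_setI0 dBC) setU0 cards0 subn0 hA hB hC.
Qed.

Lemma ineq_old (R : realFieldType) (d rho D Nr mr : R) :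
  0 < rho -> d <= 3/5 -> 13 <= Nr -> 3/2*rho*Nr <= mr ->
  (d - rho) * (Nr*(Nr-1)/2) <= D ->
  d * ((Nr+mr)*(Nr+mr-1)/2) <= D + ((Nr+mr-1)*(Nr+mr-1-1)/2 - (Nr-1)*(Nr-1-1)/2).
Proof.
move=> r0 d35 N13 hm hD.
have m0 : 0 <= mr by nra.
have b0 : (2/5) * (2 * Nr + mr - 1) <= (1 - d) * (2 * Nr + mr - 1).
  apply: ler_wpM2r; lra.
have b1 : (4 * Nr - 12) / 5 <= (1 - d) * (2 * Nr + mr - 1) - 2 by lra.
have b2 : 3/2*rho*Nr * ((4 * Nr - 12) / 5) <= mr * ((1 - d) * (2 * Nr + mr - 1) - 2).
  apply: ler_pM => //; [nra|nra].
have key : rho * Nr * (Nr - 1) <= mr * ((1 - d) * (2 * Nr + mr - 1) - 2) by nra.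
nra.
Qed.

Lemma ineq_new (R : realFieldType) (d nr : R) :
  0 < d -> d <= 3/5 -> 5 <= nr ->
  d * (nr * (nr - 1) / 2) <= (nr - 1) * (nr - 1 - 1) / 2.
Proof.
move=> d0 d35 n5.
have h : d * (nr * (nr - 1)) <= 3/5 * (nr * (nr - 1)) by apply: ler_wpM2r; nra.
nra.
Qed.

Lemma ineq_fin (R : realFieldType) (beta rho k Nr mr U U' r : R) :
  beta < 1 -> 0 <= k -> 0 <= r -> r <= mr -> 0 <= mr -> mr <= 2 * rho * Nr ->
  U <= beta * (Nr + mr) -> U' + mr = U + k * r ->
  U' <= (beta + 2 * k * rho) * Nr.
Proof.
move=> b1 k0 r0 rm m0 m2 hU he.
have h1 : k * r <= k * mr by nra.
have h2 : k * mr <= k * (2 * rho * Nr) by nra.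
have h3 : beta * mr <= mr by nra.
nra.
Qed.

Definition dj (n : nat) (T1 T2 : {set 'I_n} * {set 'I_n} * {set 'I_n}) :=
  [disjoint copy_verts T1 & copy_verts T2].

Lemma cover_card (a b c n : nat) (E : {set {set 'I_n}}) s :
  (forall T, T \in s -> is_Kcopy a b c E T) -> pairwise (@dj n) s ->
  #|tiling_cover s| = ((a + b + c) * size s)%N.
Proof.
move=> hK hp; rewrite /tiling_cover card_bigcup_seq //.
rewrite (eq_big_seq (fun _ => (a + b + c)%N)) => [|T hT]; last exact: copy_card (hK T hT).
by rewrite big_const_seq count_predT iter_addn_0.
Qed.

Lemma tiling_pw (a b c n : nat) (E : {set {set 'I_n}}) s :
  is_Ktiling a b c E s -> pairwise (@dj n) s.
Proof.
case=> _ hd; apply/(pairwiseP (set0, set0, set0)) => i j hi hj hij.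
exact: hd.
Qed.

Lemma nat_fin k K1 r U U' N m : (k * (K1 + r) + U = N + m -> k * K1 + U' = N -> U' + m = U + k * r)%N.
Proof. rewrite mulnDr; lia. Qed.

Arguments nat_fin {k K1 r U U' N m}.
Arguments tiling_pw {a b c n E s}.
Arguments cover_card {a b c n E s}.
Arguments card_bigcup_seq {X I F s}.
Arguments disj_preim {N n g A B}.
Arguments cv_phi {N n g T}.

Theorem proposition4p8 (R : realType) (a b c : nat) (d beta rho : R) :
  (1 <= a)%N -> (a <= b)%N -> (b <= c)%N ->
  0 < d -> d <= 3 / 5 -> 0 < beta -> 0 < rho ->
  exists n0 : nat,
    (forall (n : nat) (E : {set {set 'I_n}}),
        (n0 < n)%N -> is_3graph E ->
        min_deg1_ge E (d * 'C(n, 2)%:R) ->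
        has_deficient_Ktiling a b c E beta) ->
    forall (n' : nat) (E' : {set {set 'I_n'}}),
      (maxn n0 5 < n')%N -> is_3graph E' ->
      min_deg1_ge E' ((d - rho) * 'C(n', 2)%:R) ->
      has_deficient_Ktiling a b c E' (beta + 2 * (a + b + c)%:R * rho).
Proof.
move=> ha hab hbc d0 d35 b0 r0.
exists (maxn 13 (Num.truncn (2 / rho))).
move=> Hyp N E' HN H3 Hdeg.
have N13 : (13 < N)%N by lia.
have Ntr : (Num.truncn (2 / rho) < N)%N by lia.
have NR : 2 / rho < N%:R.
  apply: lt_le_trans (real_truncnS_gt (num_real _)) _; by rewrite ler_nat.
have rN : 2 < rho * N%:R.
  by move: NR; rewrite ltr_pdivrMr // mulrC.
have N13R : 13 <= (N%:R : R) by rewrite (ler_nat R 13 N); lia.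
have bR (x : nat) : ('C(x, 2)%:R : R) = x%:R * (x%:R - 1) / 2.
  by rewrite -bin2R mulfK // pnatr_eq0.
have prR (x : nat) : (0 < x)%N -> (x.-1%:R : R) = x%:R - 1.
  by case: x => // x _; rewrite -natr1 addrK.
have k0 : (0 : R) <= (a + b + c)%:R by [].
case: (lerP 1 beta) => hb.
  exists [::]; split; first by split => // i j _; rewrite ltn0.
  rewrite /tiling_cover big_nil setC0 cardsT card_ord.
  apply: ler_peMl => //; nra.
pose m := (Num.truncn (3/2 * rho * N%:R)).+1.
have m1 : 3/2 * rho * N%:R < m%:R by apply: real_truncnS_gt; exact: num_real.
have m2 : (m%:R : R) <= 3/2 * rho * N%:R + 1.
  rewrite /m -natr1 lerD2r truncn_le; nra.
have m2' : (m%:R : R) <= 2 * rho * N%:R by lra.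
pose n := (N + m)%N.
pose g : 'I_N -> 'I_n := lshift m.
have ginj : injective g by move=> x y /(congr1 val) /= /val_inj.
pose old := g @: [set: 'I_N].
pose E := [set e : {set 'I_n} | (#|e| == 3) && ~~ (e \subset old)] :|: [set (g @: e : {set 'I_n}) | e : {set 'I_N} in E'].
have cold : #|old| = N by rewrite card_imset // cardsT card_ord.
have cnew : #|~: old| = m by apply/eqP; rewrite -(eqn_add2l N) -{1}cold cardsC card_ord.
have hE3 : is_3graph E.
  move=> e; rewrite inE => /orP[]; first by rewrite inE => /andP[/eqP].
  by case/imsetP => e' he' ->; rewrite card_imset //; exact: H3.
have hEE : forall e : {set 'I_N}, g @: e \in E -> e \in E'.
  move=> e; rewrite inE => /orP[]; first by rewrite inE (imsetS g (subsetT e)) andbF.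
  by case/imsetP => e' he' /(imset_inj ginj) ->.
have Npos : (0 < N)%N by apply: leq_trans N13.
have npos : (0 < n)%N by apply: leq_trans Npos (leq_addr _ _).
have nR : (n%:R : R) = N%:R + m%:R by rewrite natrD.
have hdeg : min_deg1_ge E (d * 'C(n,2)%:R).
  move=> v; rewrite /deg1.
  set Fam := [set e : {set 'I_n} | [&& #|e| == 3, ~~ (e \subset old) & v \in e]].
  have sF : Fam \subset [set e in E | v \in e].
    by apply/subsetP => e; rewrite !inE => /and3P[h1 h2 h3]; rewrite h1 h2 h3.
  case: (boolP (v \in old)) => hv.
    case/imsetP: (hv) => u _ ev.
    set F2 := [set (g @: e : {set 'I_n}) | e : {set 'I_N} in [set e in E' | u \in e]].
    have cF2 : #|F2| = deg1 E' u by rewrite card_imset //; exact: imset_inj.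
    have s2 : F2 \subset [set e in E | v \in e].
      apply/subsetP => e /imsetP[e' /setIdP[he' hu] ->].
      rewrite inE; apply/andP; split; first by rewrite inE; apply/orP; right; apply: imset_f.
      by rewrite ev imset_f.
    have dF : Fam :&: F2 = set0.
      apply/setP => e; rewrite in_set0 in_setI; apply/negP.
      rewrite inE => /andP[/and3P[_ hn _] /imsetP[e' _ ee]]; move: hn.
      by rewrite ee (imsetS g (subsetT e')).
    have hle : (#|Fam| + deg1 E' u <= #|[set e in E | v \in e]|)%N.
      have := cardsU Fam F2; rewrite dF cards0 subn0 -cF2 => <-.
      by apply: subset_leq_card; rewrite subUset sF s2.
    have hfam := @fam_card _ v old; rewrite card_ord in hfam.
    have cOv : #|old :\ v| = N.-1 by move: (cardsD1 v old); rewrite cold hv add1n => ->.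
    rewrite cOv in hfam.
    have hbin : ('C(N.-1, 2) <= 'C(n.-1, 2))%N by apply: leq_bin2l; rewrite -!subn1 leq_sub2r // leq_addr.
    apply: le_trans (_ : ((#|Fam| + deg1 E' u)%N%:R) <= _); last by rewrite ler_nat.
    apply: le_trans (_ : (('C(n.-1,2) - 'C(N.-1,2) + deg1 E' u)%N%:R) <= _); last by rewrite ler_nat leq_add2r.
    have hD := Hdeg u; rewrite bR in hD.
    have := @ineq_old R d rho (deg1 E' u)%:R N%:R m%:R r0 d35 N13R (ltW m1) hD.
    rewrite natrD natrB // !bR prR ?prR ?nR //; lra.
  have hfam := @fam_card2 _ v old hv; rewrite card_ord in hfam.
  apply: le_trans (_ : 'C(n.-1,2)%:R <= _); last by rewrite ler_nat (leq_trans hfam) // subset_leq_card.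
  have n5 : 5 <= (n%:R : R).
    by rewrite (ler_nat R 5); apply: leq_trans (leq_addr m N); apply: leq_trans (ltnW N13).
  by rewrite !bR prR //; exact: ineq_new.
have Hn : (maxn 13 (Num.truncn (2/rho)) < n)%N.
  apply: leq_trans (leq_addr m N); by move: HN; rewrite gtn_max => /andP[].
have [s [hs hcov]] := Hyp n E Hn hE3 hdeg.
pose P := fun T : {set 'I_n} * {set 'I_n} * {set 'I_n} => copy_verts T \subset old.
pose kept := filter P s.
have pw := tiling_pw hs.
have hKk : forall T, T \in map (phiT g) kept -> is_Kcopy a b c E' T.
  move=> T /mapP[T0 hT0 ->]; rewrite mem_filter in hT0; case/andP: hT0 => hP hT0.
  exact: (@copy_transfer a b c N n g E' E T0 ginj hEE (hs.1 T0 hT0) hP).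
have pw' : pairwise (@dj N) (map (phiT g) kept).
  rewrite pairwise_map; apply: sub_pairwise (pairwise_filter P pw) => T1 T2.
  case: T1 => [[A1 B1] C1]; case: T2 => [[A2 B2] C2] => h; rewrite /relpre /dj /= -!preimsetU; exact: disj_preim.
exists (map (phiT g) kept); split.
  split => // i j hij hj; move/(pairwiseP (set0, set0, set0)): pw' => h.
  exact: h (ltn_trans hij hj) hj hij.
have hr : (count (predC P) s <= m)%N.
  set D := filter (predC P) s.
  have pwD : pairwise (fun x y => [disjoint copy_verts x :&: ~: old & copy_verts y :&: ~: old]) D.
    apply: sub_pairwise (pairwise_filter _ pw) => T1 T2 h.
    exact: disjointW (subsetIl _ _) (subsetIl _ _) h.
  have := card_bigcup_seq pwD.
  have sub : \bigcup_(T <- D) (copy_verts T :&: ~: old) \subset ~: old.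
    rewrite bigcup_seq; apply/bigcupsP => T _; exact: subsetIr.
  have ge : (size D <= \sum_(T <- D) #|copy_verts T :&: ~: old|)%N.
    rewrite -sum1_size big_seq [X in (_ <= X)%N]big_seq; apply: leq_sum => T.
    rewrite mem_filter /= => /andP[hnP _].
    by rewrite card_gt0 -setDE setD_eq0.
  rewrite -size_filter -cnew => e; apply: leq_trans ge _; rewrite -e; exact: subset_leq_card.
have hsz : size s = (size kept + count (predC P) s)%N by rewrite size_filter count_predC.
have c1 := cover_card hs.1 pw.
have c2 := cover_card hKk pw'.
have cs := cardsC (tiling_cover s); rewrite card_ord c1 hsz in cs.
have cs' := cardsC (tiling_cover (map (phiT g) kept)); rewrite card_ord c2 size_map in cs'.
have he := nat_fin cs cs'.
apply: (@ineq_fin R beta rho (a+b+c)%:R N%:R m%:R #|~: tiling_cover s|%:R _ (count (predC P) s)%:R) => //.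
- by rewrite ler_nat.
- by rewrite -nR.
- by rewrite -natrM -!natrD he.
Qed.
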